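(* Let $n\ge 1$ agents all value every item at $1$, and consider any online algorithm that in every round $s$ outputs a contiguous allocation $A^s$ of $M_s$ satisfying $v(A^s_i)\ge\frac1n v(M_s)-\frac{n-1}{n}\max_{g\in M_s}v(g)$ for all $i$. Let $t\ge n^2$ and $i\in[n]$, and write $t=ki-r$ with $0\le r<i$. If $k\ge n$ and the number of rounds is at least $kn$, then in round $kn$ item $g_t$ is assigned to agent $i$; moreover in round $t$ item $g_t$ is assigned to agent $n$. Consequently, if the number of rounds is large enough, $g_t$ is assigned to every agent in some round.
   Context: Items $g_1,g_2,\dots$ arrive online on a line; $M_s=\{g_1,\dots,g_s\}$. A contiguous allocation of $M_s$ is $A_i=\{g_{p_{i-1}+1},\dots,g_{p_i}\}$ for some $0=p_0\le p_1\le\dots\le p_n=s$, i.e. agent $i$ receives the $i$-th block from the left. The valuation is additive and identical for all agents. *)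

(* Defs.v *)
From mathcomp Require Import all_boot all_order all_algebra.
Set Implicit Arguments. Unset Strict Implicit. Unset Printing Implicit Defensive.
Import Order.TTheory GRing.Theory Num.Theory.

(* Items g_1, g_2, ... are indexed by positive naturals; every agent values
   every item at 1 (identical additive valuation). *)
Definition v (g : nat) : nat := 1.

(* A contiguous allocation of M_s = {g_1,...,g_s} among n agents is given by
   cut points p 0 <= p 1 <= ... <= p n with p 0 = 0 and p n = s;
   agent i (1 <= i <= n) receives {g_(p (i-1) + 1), ..., g_(p i)}. *)
Definition contiguous_alloc (n s : nat) (p : nat -> nat) : Prop :=
  p 0 = 0 /\ p n = s /\ (forall j, j < n -> p j <= p j.+1).

Definition bundle_val (p : nat -> nat) (i : nat) : nat :=
  \sum_(p i.-1 <= j < p i) v j.+1.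

(* v(M_s) and max_{g in M_s} v(g) (the max over the empty set is 0) *)
Definition total_val (s : nat) : nat := \sum_(0 <= j < s) v j.+1.
Definition max_val (s : nat) : nat := \max_(0 <= j < s) v j.+1.

Definition fair_round (n s : nat) (p : nat -> nat) : Prop :=
  forall i, 1 <= i <= n ->
    ((s%:R / n%:R - (n.-1)%:R / n%:R * (max_val s)%:R : rat)
       <= (bundle_val p i)%:R)%R.

(* an online algorithm running for T rounds: alloc s is the cut-point
   function of the allocation A^s output in round s (1 <= s <= T) *)
Definition valid_run (n T : nat) (alloc : nat -> nat -> nat) : Prop :=
  forall s, 1 <= s <= T ->
    contiguous_alloc n (total_val s) (alloc s) /\ fair_round n (total_val s) (alloc s).

Definition assigned (alloc : nat -> nat -> nat) (s i t : nat) : Prop :=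
  alloc s i.-1 < t <= alloc s i.

(* Main.v *)
Require Import Defs.
From mathcomp Require Import all_boot all_order all_algebra.
From mathcomp Require Import zify.
Import Order.TTheory GRing.Theory Num.Theory.

Lemma total_valE s : total_val s = s.
Proof. by rewrite /total_val /v sum_nat_const_nat subn0 muln1. Qed.

Lemma max_valE s : max_val s = (0 < s).
Proof.
elim: s => [|s IH]; first by rewrite /max_val big_geq.
by rewrite /max_val big_nat_recr //= -/(max_val s) IH /v; case: (0 < s).
Qed.

Lemma bundle_valE p i : bundle_val p i = p i - p i.-1.
Proof. by rewrite /bundle_val /v sum_nat_const_nat muln1. Qed.

Lemma fair_lb n s p : 1 <= n -> 1 <= s -> fair_round n s p ->
  forall i, 1 <= i <= n -> s %/ n <= p i - p i.-1.
Proof.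
move=> hn hs hf i hi; have := hf i hi.
rewrite max_valE hs bundle_valE.
set b := p i - p i.-1.
have n0 : (0 < n%:R :> rat)%R by rewrite ltr0n.
rewrite /= mulr1n mulr1 -mulrBl ler_pdivrMr // -!natrM.
rewrite lerBlDr -natrD ler_nat => h.
rewrite -ltnS ltn_divLR; last by [].
lia.
Qed.

Lemma gaps n p c : (forall j, j < n -> p j <= p j.+1) ->
  (forall i, 1 <= i <= n -> c <= p i - p i.-1) ->
  forall j, j <= n -> p 0 + j * c <= p j /\ p j + (n - j) * c <= p n.
Proof.
move=> hm hg j hj; split.
  elim: j hj => [|j IH] hj; first by rewrite mul0n addn0.
  have := hg j.+1; have := hm j; have := IH (ltnW hj); simpl; lia.
have: forall m, m <= n -> p (n - m) + m * c <= p n.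
  elim=> [|m IH] hmn; first by rewrite subn0 mul0n addn0.
  have := IH (ltnW hmn); have := hg (n - m); have := hm (n - m.+1).
  have -> : (n - m).-1 = n - m.+1 by lia.
  have -> : (n - m.+1).+1 = n - m by lia.
  lia.
move/(_ (n - j)); rewrite subKn //; apply; lia.
Qed.

Theorem mainTheorem7 (n : nat) (hn : 1 <= n) :
  (forall (T : nat) (alloc : nat -> nat -> nat), valid_run n T alloc ->
   forall t i k r : nat, n ^ 2 <= t -> 1 <= i <= n ->
     t + r = k * i -> r < i -> n <= k -> k * n <= T ->
     assigned alloc (k * n) i t /\ assigned alloc t n t)
  /\
  (forall t : nat, n ^ 2 <= t ->
     exists T0 : nat, forall (T : nat) (alloc : nat -> nat -> nat),
       T0 <= T -> valid_run n T alloc ->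
       forall i, 1 <= i <= n -> exists s, 1 <= s <= T /\ assigned alloc s i t).
Proof.
have part1 : forall (T : nat) (alloc : nat -> nat -> nat), valid_run n T alloc ->
   forall t i k r : nat, n ^ 2 <= t -> 1 <= i <= n ->
     t + r = k * i -> r < i -> n <= k -> k * n <= T ->
     assigned alloc (k * n) i t /\ assigned alloc t n t.
  move=> T alloc hv t i k r ht hi htr hr hk hT.
  have hi1 : i <= n by case/andP: hi.
  have hi0 : 1 <= i by case/andP: hi.
  have tle : t <= k * n by have := leq_mul (leqnn k) hi1; lia.
  split.
    have hs : 1 <= k * n <= T by apply/andP; split; [rewrite muln_gt0; lia | ].
    case: (hv _ hs); rewrite total_valE => -[h0 [hN hm]] hf.
    have hkn : 0 < k * n by rewrite muln_gt0; lia.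
    have hg := @fair_lb n (k * n) _ hn hkn hf; rewrite mulnK // in hg.
    have [A B] := @gaps n _ k hm hg i.-1 ltac:(lia).
    have [A2 B2] := @gaps n _ k hm hg i hi1.
    rewrite /assigned; apply/andP; split.
      rewrite h0 in A; have := leq_mul (leqnn k) hk; nia.
    rewrite h0 in A2 B2; nia.
  have ht1 : 1 <= t <= T by apply/andP; split; [rewrite -mulnn in ht; nia | lia].
  case: (hv _ ht1); rewrite total_valE => -[h0 [hN hm]] hf.
  have ht0 : 0 < t by case/andP: ht1.
  have hg := @fair_lb n t _ hn ht0 hf.
  have hq : n <= t %/ n by rewrite leq_divRL // mulnn.
  have := hg n; rewrite /assigned hN; move=> /(_ ltac:(lia)) hh.
  apply/andP; split; [lia | done].
split; first exact: part1.
move=> t ht; exists (t * n) => T alloc hT hv i hi.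
have hi0 : 0 < i by case/andP: hi.
have hi1 : i <= n by case/andP: hi.
set k := (t + i.-1) %/ i.
have e1 := divn_eq (t + i.-1) i.
have e2 : (t + i.-1) %% i < i by rewrite ltn_mod.
have hk : n <= k.
  rewrite leq_divRL //; have := leq_mul (leqnn n) hi1; rewrite -mulnn in ht; nia.
have hkt : k <= t.
  rewrite leqNgt; apply/negP => h.
  have := leq_mul h (leqnn i); have := leq_pmulr t hi0.
  have : k * i <= t + i.-1 by rewrite e1 leq_addr.
  lia.
exists (k * n); split.
  apply/andP; split; [rewrite muln_gt0; lia | ].
  have := leq_mul hkt (leqnn n); lia.
have [H _] := part1 T alloc hv t i k (k * i - t) ht hi ltac:(nia) ltac:(nia) hk
  ltac:(have := leq_mul hkt (leqnn n); lia).
exact H.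
Qed.
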